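(* Let $G$ be a connected oriented diagram with $V\ge 2$ vertices, internal legs $\ell_1,\dots,\ell_I$, and no tadpoles. For each leg $j$, let $a_j$ and $b_j$ denote the tail and head vertices of $\ell_j$. Fix complex numbers $\zeta_j^\pm,\xi_j^\pm$ with $\operatorname{Im}\zeta_j^+>0$, $\operatorname{Im}\xi_j^+>0$, $\operatorname{Im}\zeta_j^-<0$, $\operatorname{Im}\xi_j^-<0$. For real $t\neq 0$ define $$\tilde z_j(t)=i\theta(t)e^{it\zeta_j^+}-i\theta(-t)e^{it\zeta_j^-},\qquad \tilde u_j(t)=i\theta(t)e^{it\zeta_j^+}-i\theta(-t)e^{it\xi_j^-},$$ $$\tilde v_j(t)=i\theta(t)e^{it\xi_j^+}-i\theta(-t)e^{it\zeta_j^-},\qquad \tilde w_j(t)=i\theta(t)e^{it\xi_j^+}-i\theta(-t)e^{it\xi_j^-},$$ where $\theta$ is the Heaviside step function. For a marking $M$ (a subset of the vertex set, with $m=|M|$), let $\tilde p_{Mj}$ be given by: - $\tilde p_{Mj}=\tilde z_j$ if $a_j,b_j$ are both unmarked; - $\tilde p_{Mj}=\tilde w_j$ if both are marked; - $\tilde p_{Mj}=\tilde u_j$ if $a_j$ is unmarked and $b_j$ is marked; - $\tilde p_{Mj}=\tilde v_j$ if $a_j$ is marked and $b_j$ is unmarked. Then for every $V$-tuple of pairwise distinct real times $t_1,\dots,t_V$ (where $t_a$ is attached to vertex $\nu_a$), $$\sum_{M}(-1)^{|M|}\prod_{j=1}^I\tilde p_{Mj}(t_{a_j}-t_{b_j})=0,$$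 the sum running over all markings $M$.
   Context: A diagram is a finite graph with vertices $\nu_1,\dots,\nu_V$ and oriented internal legs $\ell_1,\dots,\ell_I$ (multiple legs allowed); a tadpole is a leg whose two endpoints coincide. Let $c$ be the number of connected components and $L=I-V+c$. The diagram is oriented if there exist $L$ simple cycles that are directed cycles with respect to the leg orientations and whose edge-indicator vectors in $\mathbb{R}^I$ are linearly independent. The functions $\tilde z_j,\tilde w_j,\tilde u_j,\tilde v_j$ are the Fourier transforms $\int\frac{dE}{2\pi}e^{iEt}(\cdot)$ of $z_j,w_j,u_j,v_j$ obtained with $\sigma_j^\pm(E)=1/(E-\zeta_j^\pm)$ and $\tau_j^\pm(E)=1/(E-\xi_j^\pm)$, where $z_j=\sigma_j^++\sigma_j^-$, $w_j=\tau_j^++\tau_j^-$, $u_j=\sigma_j^++\tau_j^-$, $v_j=\sigma_j^-+\tau_j^+$. *)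

(* Defs.v *)
From Stdlib Require Import Reals Lra Lia List.
Import ListNotations.
Open Scope R_scope.

Record Cplx := mkC { Re : R ; Im : R }.
Definition C0 : Cplx := mkC 0 0.
Definition Ci : Cplx := mkC 0 1.
Definition RtoC (x : R) : Cplx := mkC x 0.
Definition Cadd (z w : Cplx) : Cplx := mkC (Re z + Re w) (Im z + Im w).
Definition Copp (z : Cplx) : Cplx := mkC (- Re z) (- Im z).
Definition Csub (z w : Cplx) : Cplx := Cadd z (Copp w).
Definition Cmul (z w : Cplx) : Cplx :=
  mkC (Re z * Re w - Im z * Im w) (Re z * Im w + Im z * Re w).
Definition Cexp (z : Cplx) : Cplx := mkC (exp (Re z) * cos (Im z)) (exp (Re z) * sin (Im z)).
Definition Csum (l : list Cplx) : Cplx := fold_right Cadd C0 l.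
Definition Cprod (l : list Cplx) : Cplx := fold_right Cmul (RtoC 1) l.

Definition theta (t : R) : R := if Rlt_dec 0 t then 1 else 0.

Definition prop_ft (alpha beta : Cplx) (t : R) : Cplx :=
  Csub (Cmul (Cmul Ci (RtoC (theta t))) (Cexp (Cmul (Cmul Ci (RtoC t)) alpha)))
       (Cmul (Cmul Ci (RtoC (theta (- t)))) (Cexp (Cmul (Cmul Ci (RtoC t)) beta))).

Definition zt (zp zm : Cplx) := prop_ft zp zm.
Definition ut (zp xm : Cplx) := prop_ft zp xm.
Definition vt (xp zm : Cplx) := prop_ft xp zm.
Definition wt (xp xm : Cplx) := prop_ft xp xm.

(* ---------- Diagrams ----------
   Vertices are 0..V-1, legs are 0..I-1; leg j goes from tail tl j to head hd j. *)
Definition wf_diagram (V I : nat) (tl hd : nat -> nat) : Prop :=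
  forall j, (j < I)%nat -> (tl j < V)%nat /\ (hd j < V)%nat.

Definition no_tadpoles (I : nat) (tl hd : nat -> nat) : Prop :=
  forall j, (j < I)%nat -> tl j <> hd j.

Inductive reach (I : nat) (tl hd : nat -> nat) (a : nat) : nat -> Prop :=
| reach_refl : reach I tl hd a a
| reach_fw : forall b j, reach I tl hd a b -> (j < I)%nat -> tl j = b -> reach I tl hd a (hd j)
| reach_bw : forall b j, reach I tl hd a b -> (j < I)%nat -> hd j = b -> reach I tl hd a (tl j).

Definition connected (V I : nat) (tl hd : nat -> nat) : Prop :=
  (1 <= V)%nat /\ forall a b, (a < V)%nat -> (b < V)%nat -> reach I tl hd a b.

Definition directed_simple_cycle (I : nat) (tl hd : nat -> nat) (js : list nat) : Prop :=
  exists vs : list nat,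
    (1 <= length js)%nat /\ length vs = length js /\ NoDup js /\ NoDup vs /\
    forall i, (i < length js)%nat ->
      (nth i js 0%nat < I)%nat /\ tl (nth i js 0%nat) = nth i vs 0%nat /\
      hd (nth i js 0%nat) = nth ((i + 1) mod length js) vs 0%nat.

Definition indicator (js : list nat) (j : nat) : R :=
  if in_dec Nat.eq_dec j js then 1 else 0.

Definition lin_indep (I L : nat) (cyc : nat -> list nat) : Prop :=
  forall lam : nat -> R,
    (forall j, (j < I)%nat ->
       fold_right Rplus 0 (map (fun k => lam k * indicator (cyc k) j) (seq 0 L)) = 0) ->
    forall k, (k < L)%nat -> lam k = 0.

(* loop number L = I - V + c, here with c = 1 (connected diagram) *)
Definition oriented_connected (V I : nat) (tl hd : nat -> nat) : Prop :=
  let L := (I + 1 - V)%nat in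
  exists cyc : nat -> list nat,
    (forall k, (k < L)%nat -> directed_simple_cycle I tl hd (cyc k)) /\
    lin_indep I L cyc.

(* ---------- Markings ----------
   A marking of the V vertices is a list of V booleans (true = marked). *)
Fixpoint markings (V : nat) : list (list bool) :=
  match V with
  | O => [ [] ]
  | S n => map (cons false) (markings n) ++ map (cons true) (markings n)
  end.

Definition marked (M : list bool) (a : nat) : bool := nth a M false.
Definition card_marking (M : list bool) : nat := count_occ Bool.bool_dec M true.

Definition p_tilde (M : list bool) (tl hd : nat -> nat)
    (zp zm xp xm : nat -> Cplx) (j : nat) : R -> Cplx :=
  match marked M (tl j), marked M (hd j) with
  | false, false => zt (zp j) (zm j)
  | true, true => wt (xp j) (xm j)
  | false, true => ut (zp j) (xm j)
  | true, false => vt (xp j) (zm j)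
  end.

Definition sign_pow (n : nat) : Cplx := RtoC ((-1) ^ n).

(* Main.v *)
Require Import Defs.
From Stdlib Require Import Reals List Lra Lia.
Import ListNotations.
Open Scope R_scope.

Lemma Ceq : forall z w, Re z = Re w -> Im z = Im w -> z = w.
Proof. intros [a b] [c d]; simpl; intros; subst; reflexivity. Qed.

Lemma Csum_app : forall l1 l2, Csum (l1 ++ l2) = Cadd (Csum l1) (Csum l2).
Proof.
  induction l1; intros; simpl.
  - apply Ceq; simpl; ring.
  - rewrite IHl1; apply Ceq; simpl; ring.
Qed.

Lemma Csum_opp : forall (A : Type) (g h : A -> Cplx) l,
  (forall x, In x l -> g x = Copp (h x)) ->
  Csum (map g l) = Copp (Csum (map h l)).
Proof.
  induction l; intros H; simpl.
  - apply Ceq; simpl; ring.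
  - rewrite H by (left; auto). rewrite IHl by (intros; apply H; right; auto).
    apply Ceq; simpl; ring.
Qed.

Fixpoint flip (k : nat) (M : list bool) : list bool :=
  match M, k with
  | [], _ => []
  | b :: M', O => negb b :: M'
  | b :: M', S k' => b :: flip k' M'
  end.

Lemma card_true : forall M, card_marking (true :: M) = S (card_marking M).
Proof. intros; unfold card_marking; simpl; reflexivity. Qed.
Lemma card_false : forall M, card_marking (false :: M) = card_marking M.
Proof. intros; unfold card_marking; simpl; reflexivity. Qed.

Lemma key : forall n k (G : list bool -> Cplx), (k < n)%nat ->
  (forall M, In M (markings n) -> G (flip k M) = G M) ->
  Csum (map (fun M => Cmul (sign_pow (card_marking M)) (G M)) (markings n)) = C0.
Proof.
  induction n; intros k G Hk HG; [lia|].
  simpl. rewrite map_app, Csum_app, !map_map.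
  destruct k as [|k'].
  - rewrite (Csum_opp _ (fun x => Cmul (sign_pow (card_marking (true :: x))) (G (true :: x))) (fun x => Cmul (sign_pow (card_marking (false :: x))) (G (false :: x)))).
    + generalize (Csum (map (fun x => Cmul (sign_pow (card_marking (false :: x))) (G (false :: x))) (markings n))).
      intro c; apply Ceq; simpl; ring.
    + intros x Hx. rewrite card_true, card_false.
      assert (E : G (true :: x) = G (false :: x)).
      { apply (HG (false :: x)). simpl. apply in_or_app; left; apply in_map; auto. }
      rewrite E. unfold sign_pow. apply Ceq; simpl; ring.
  - rewrite (map_ext (fun x => Cmul (sign_pow (card_marking (false :: x))) (G (false :: x))) (fun x => Cmul (sign_pow (card_marking x)) (G (false :: x)))) by (intro; rewrite card_false; reflexivity).
    rewrite (IHn k' (fun x => G (false :: x))).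
    + rewrite (Csum_opp _ (fun x => Cmul (sign_pow (card_marking (true :: x))) (G (true :: x))) (fun x => Cmul (sign_pow (card_marking x)) (G (true :: x)))).
      * rewrite (IHn k' (fun x => G (true :: x))).
        -- apply Ceq; simpl; lra.
        -- lia.
        -- intros M HM. apply (HG (true :: M)). simpl. apply in_or_app; right; apply in_map; auto.
      * intros x Hx. rewrite card_true. unfold sign_pow. apply Ceq; simpl; ring.
    + lia.
    + intros M HM. apply (HG (false :: M)). simpl. apply in_or_app; left; apply in_map; auto.
Qed.

Lemma nth_flip_neq : forall M a k, a <> k -> nth a (flip k M) false = nth a M false.
Proof.
  induction M as [|b M IHM]; intros x k H.
  - destruct k; reflexivity.
  - destruct k as [|k]; destruct x as [|x]; simpl; try reflexivity; try lia.
    apply IHM; lia.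
Qed.

Lemma prop_neg : forall a a' b x, x < 0 -> prop_ft a b x = prop_ft a' b x.
Proof.
  intros. unfold prop_ft. assert (theta x = 0) as E.
  { unfold theta; destruct (Rlt_dec 0 x); lra. }
  rewrite E. apply Ceq; simpl; ring.
Qed.

Lemma prop_pos : forall a b b' x, 0 < x -> prop_ft a b x = prop_ft a b' x.
Proof.
  intros. unfold prop_ft. assert (theta (-x) = 0) as E.
  { unfold theta; destruct (Rlt_dec 0 (-x)); lra. }
  rewrite E. apply Ceq; simpl; ring.
Qed.

Lemma argmin : forall (t : nat -> R) n, (1 <= n)%nat ->
  exists k, (k < n)%nat /\ forall a, (a < n)%nat -> t k <= t a.
Proof.
  intros t n; induction n; intros H; [lia|].
  destruct n.
  - exists 0%nat; split; [lia|]; intros a Ha; assert (a = 0%nat) by lia; subst; lra.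
  - destruct IHn as [k [Hk Hm]]; [lia|].
    destruct (Rle_dec (t k) (t (S n))).
    + exists k; split; [lia|]; intros a Ha.
      destruct (Nat.eq_dec a (S n)); [subst; auto| apply Hm; lia].
    + exists (S n); split; [lia|]; intros a Ha.
      destruct (Nat.eq_dec a (S n)); [subst; lra|]. specialize (Hm a ltac:(lia)); lra.
Qed.

Theorem mainTheorem3
  (V I : nat) (tl hd : nat -> nat)
  (Hwf : wf_diagram V I tl hd)
  (HV : (2 <= V)%nat)
  (Hconn : connected V I tl hd)
  (Hor : oriented_connected V I tl hd)
  (Htad : no_tadpoles I tl hd)
  (zp zm xp xm : nat -> Cplx)
  (Hzp : forall j, (j < I)%nat -> Im (zp j) > 0)
  (Hxp : forall j, (j < I)%nat -> Im (xp j) > 0)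
  (Hzm : forall j, (j < I)%nat -> Im (zm j) < 0)
  (Hxm : forall j, (j < I)%nat -> Im (xm j) < 0)
  (t : nat -> R)
  (Ht : forall a b, (a < V)%nat -> (b < V)%nat -> a <> b -> t a <> t b) :
  Csum (map (fun M =>
          Cmul (sign_pow (card_marking M))
               (Cprod (map (fun j => p_tilde M tl hd zp zm xp xm j (t (tl j) - t (hd j)))
                           (seq 0 I))))
        (markings V)) = C0.
Proof.
  destruct (argmin t V ltac:(lia)) as [k [Hk Hmin]].
  apply (key V k (fun M => Cprod (map (fun j => p_tilde M tl hd zp zm xp xm j (t (tl j) - t (hd j)))
                           (seq 0 I)))); auto.
  intros M _. f_equal. apply map_ext_in. intros j Hj. apply in_seq in Hj.
  destruct (Hwf j ltac:(lia)) as [Htl Hhd].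
  pose proof (Htad j ltac:(lia)) as Hnt.
  unfold p_tilde, marked, zt, ut, vt, wt.
  destruct (Nat.eq_dec (tl j) k) as [Et|Et].
  - assert (hd j <> k) as Eh by congruence.
    rewrite (nth_flip_neq M (hd j) k Eh).
    assert (t (tl j) - t (hd j) < 0).
    { pose proof (Hmin (hd j) Hhd). pose proof (Ht (tl j) (hd j) Htl Hhd Hnt). subst; lra. }
    destruct (nth (tl j) (flip k M) false), (nth (tl j) M false), (nth (hd j) M false);
      try reflexivity; apply prop_neg; auto.
  - rewrite (nth_flip_neq M (tl j) k Et).
    destruct (Nat.eq_dec (hd j) k) as [Eh|Eh].
    + assert (t (tl j) - t (hd j) > 0).
      { pose proof (Hmin (tl j) Htl). pose proof (Ht (tl j) (hd j) Htl Hhd Hnt). subst; lra. }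
      destruct (nth (hd j) (flip k M) false), (nth (tl j) M false), (nth (hd j) M false);
        try reflexivity; apply prop_pos; lra.
    + rewrite (nth_flip_neq M (hd j) k Eh). reflexivity.
Qed.
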